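(* Let $\alpha,\beta,\gamma,x$ be non-negative integers with $(\alpha,\beta,\gamma,x)\neq(0,0,0,0)$. Then for every integer $n\ge0$, $$T_{n+1}^{1,x}(\alpha,\beta,\gamma)=\gamma\,T_n^{1,x}(\alpha,\beta,\gamma-\alpha)+x\beta\sum_{k=0}^{n}\binom{n}{k}T_k^{1,x}(\alpha,\beta,\gamma+\beta-\alpha)\,T_{n-k}^{1,x}(\alpha,\beta,0).$$
   Context: For complex numbers $c,\alpha$ and an integer $n\ge 0$ let $(c|\alpha)_n=\prod_{i=0}^{n-1}(c-i\alpha)$, with $(c|\alpha)_0=1$. Let $E_{\alpha,c}(t)=\sum_{n\ge 0}(c|\alpha)_n\,t^n/n!$, viewed as a formal power series in $t$. It equals $(1+\alpha t)^{c/\alpha}$ if $\alpha\neq0$ and $e^{ct}$ if $\alpha=0$. For complex $\alpha,\beta,\gamma,x$ and a non-negative integer $\lambda$, the numbers $T_n^{\lambda,x}(\alpha,\beta,\gamma)$, $n\ge0$, are defined by the formal power series identity $$\sum_{n\ge0}T_n^{\lambda,x}(\alpha,\beta,\gamma)\frac{t^n}{n!}=E_{\alpha,\gamma}(t)\,\bigl(1-x(E_{\alpha,\beta}(t)-1)\bigr)^{-\lambda}.$$ The third argument may be any complex number. *)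

(* Defs.v *)
From HB Require Import structures.
From mathcomp Require Import all_boot all_order all_algebra all_field.
Set Implicit Arguments. Unset Strict Implicit. Unset Printing Implicit Defensive.
Import Order.TTheory GRing.Theory Num.Theory.
Local Open Scope ring_scope.

Definition fps := nat -> algC.

Definition fps_one : fps := fun n => (n == 0%N)%:R.

Definition fps_mul (f g : fps) : fps :=
  fun n => \sum_(k < n.+1) f k * g (n - k)%N.

Definition fps_pow (f : fps) (m : nat) : fps := iter m (fps_mul f) fps_one.

(* multiplicative inverse of a formal power series with nonzero constant term:
   g_0 = 1/f_0, g_n = -(1/f_0) * sum_{k=1}^n f_k g_{n-k} *)
Fixpoint fps_inv_seq (f : fps) (n : nat) : seq algC :=
  match n with
  | 0%N => [:: (f 0%N)^-1]
  | m.+1 => let s := fps_inv_seq f m in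
            rcons s (- (f 0%N)^-1 * \sum_(k < m.+1) f k.+1 * nth 0 s (m - k)%N)
  end.

Definition fps_inv (f : fps) : fps := fun n => nth 0 (fps_inv_seq f n) n.

Definition gfall (c alpha : algC) (n : nat) : algC :=
  \prod_(i < n) (c - i%:R * alpha).

Definition Efps (alpha c : algC) : fps := fun n => gfall c alpha n / n`!%:R.

Definition T (lambda : nat) (x alpha beta gamma : algC) (n : nat) : algC :=
  n`!%:R * fps_mul (Efps alpha gamma)
     (fps_pow (fps_inv (fun k => fps_one k - x * (Efps alpha beta k - fps_one k))) lambda) n.

(* Main.v *)
Require Import Defs.
From HB Require Import structures.
From mathcomp Require Import all_boot all_order all_algebra all_field.
From mathcomp Require Import ring.
From Stdlib Require Import FunctionalExtensionality.
Import Order.TTheory GRing.Theory Num.Theory.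
Local Open Scope ring_scope.

Local Notation M := fps_mul.
Definition Pt (f : fps) (N : nat) : {poly algC} := \poly_(i < N) f i.

Lemma coefPt f N i : (i < N)%N -> (Pt f N)`_i = f i.
Proof. by move=> h; rewrite coef_poly h. Qed.

Lemma Mcoef f g (p q : {poly algC}) n :
  (forall i, (i <= n)%N -> p`_i = f i) -> (forall i, (i <= n)%N -> q`_i = g i) ->
  M f g n = (p * q)`_n.
Proof.
move=> hp hq; rewrite coefM /M; apply: eq_bigr => -[i hi] _ /=.
by rewrite hp // hq // leq_subr.
Qed.

Lemma coefPM f g N i : (i < N)%N -> (Pt f N * Pt g N)`_i = M f g i.
Proof.
move=> h; symmetry; apply: Mcoef => k hk; apply: coefPt; exact: leq_ltn_trans hk h.
Qed.

Lemma MC f g : M f g = M g f.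
Proof.
apply: functional_extensionality => n.
by rewrite -(@coefPM f g n.+1 n (ltnSn n)) mulrC coefPM.
Qed.

Lemma MA f g h : M (M f g) h = M f (M g h).
Proof.
apply: functional_extensionality => n.
rewrite (@Mcoef _ _ (Pt f n.+1 * Pt g n.+1) (Pt h n.+1)); last first.
- by move=> i hi; rewrite coefPt.
- by move=> i hi; rewrite coefPM.
rewrite -mulrA; symmetry; apply: Mcoef => i hi.
  by rewrite coefPt.
by rewrite coefPM.
Qed.

Lemma Madd f g h : M (fun n => f n + g n) h = fun n => M f h n + M g h n.
Proof.
apply: functional_extensionality => n; rewrite /M -big_split /=.
by apply: eq_bigr => i _; rewrite mulrDl.
Qed.

Lemma Mscale c f g : M (fun n => c * f n) g = fun n => c * M f g n.
Proof.
apply: functional_extensionality => n; rewrite /M mulr_sumr.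
by apply: eq_bigr => i _; rewrite mulrA.
Qed.

Lemma M0 g : M (fun _ => 0) g = fun _ => 0.
Proof.
apply: functional_extensionality => n; rewrite /M big1 // => i _; exact: mul0r.
Qed.

Lemma M1 f : M fps_one f = f.
Proof.
apply: functional_extensionality => n; rewrite /M big_ord_recl /= subn0.
rewrite big1 ?addr0 /fps_one /= ?mul1r // => i _; exact: mul0r.
Qed.

Definition Dop (f : fps) : fps := fun n => n.+1%:R * f n.+1.

Lemma DM f g : Dop (M f g) = fun n => M (Dop f) g n + M f (Dop g) n.
Proof.
apply: functional_extensionality => n.
pose N := n.+2.
rewrite /Dop -(@coefPM f g n.+2 n.+1 (ltnSn n.+1)).
have -> : n.+1%:R * (Pt f n.+2 * Pt g n.+2)`_n.+1 = ((Pt f n.+2 * Pt g n.+2)^`())`_n.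
  by rewrite coef_deriv mulr_natl.
rewrite derivM coefD.
congr (_ + _); symmetry; apply: Mcoef => i hi.
- by rewrite coef_deriv coefPt ?mulr_natl // ltnS ltnS.
- by rewrite coefPt // ltnS (leq_trans hi).
- by rewrite coefPt // ltnS (leq_trans hi).
- by rewrite coef_deriv coefPt ?mulr_natl // ltnS ltnS.
Qed.

Lemma size_inv_seq f m : size (fps_inv_seq f m) = m.+1.
Proof. by elim: m => //= m ih; rewrite size_rcons ih. Qed.

Lemma nth_inv_seq f m i : (i <= m)%N -> nth 0 (fps_inv_seq f m) i = fps_inv f i.
Proof.
elim: m i => [|m ih] i hi.
  by move: hi; rewrite leqn0 => /eqP ->.
rewrite leq_eqVlt in hi; case/orP: hi => [/eqP -> //|hi].
by rewrite /= nth_rcons size_inv_seq hi ih.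
Qed.

Lemma inv_seq_succ f m : fps_inv f m.+1 =
  - (f 0%N)^-1 * \sum_(k < m.+1) f k.+1 * fps_inv f (m - k)%N.
Proof.
rewrite /fps_inv /= nth_rcons size_inv_seq ltnn eqxx; congr (_ * _).
by apply: eq_bigr => -[k hk] _ /=; rewrite nth_inv_seq // leq_subr.
Qed.

Lemma Minv f : f 0%N != 0 -> M f (fps_inv f) = fps_one.
Proof.
move=> h; apply: functional_extensionality => n; case: n => [|m].
  by rewrite /M big_ord1 /fps_inv /= divff.
rewrite /M big_ord_recl /= subn0 inv_seq_succ /fps_one /=.
rewrite mulrA mulrN divff // mulN1r.
have -> : \sum_(i < m.+1) f (bump 0 i) * fps_inv f (m.+1 - bump 0 i)%N
   = \sum_(k < m.+1) f k.+1 * fps_inv f (m - k)%N by apply: eq_bigr.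
by rewrite addNr.
Qed.

Lemma gfallS c a n : gfall c a n.+1 = c * gfall (c - a) a n.
Proof.
rewrite /gfall big_ord_recl /= mul0r subr0; congr (_ * _).
apply: eq_bigr => i _; rewrite /bump /= add1n -addn1 natrD mulrDl mul1r.
by rewrite opprD addrA addrAC.
Qed.

Lemma fact_neq0 n : (n`!%:R : algC) != 0.
Proof. by rewrite pnatr_eq0 -lt0n fact_gt0. Qed.

Lemma DE a c : Dop (Efps a c) = fun n => c * Efps a (c - a) n.
Proof.
apply: functional_extensionality => n; rewrite /Dop /Efps gfallS factS natrM.
have h1 := fact_neq0 n.
have h2 : (n.+1%:R : algC) != 0 by rewrite pnatr_eq0.
by field; rewrite h1 (_ : 1 + n%:R = n.+1%:R) ?h2 // addrC natr1.
Qed.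

Lemma E0 a c : Efps a c 0%N = 1.
Proof. by rewrite /Efps /gfall big_ord0 /= divr1. Qed.

Lemma Ezero a : Efps a 0 = fps_one.
Proof.
apply: functional_extensionality => -[|n]; first by rewrite E0.
by rewrite /Efps gfallS mul0r mul0r.
Qed.

Lemma EE a c d : M (Efps a c) (Efps a d) = Efps a (c + d).
Proof.
apply: functional_extensionality => n; elim: n c d => [|n ih] c d.
  by rewrite /M big_ord1 !E0 mul1r.
have h2 : (n.+1%:R : algC) != 0 by rewrite pnatr_eq0.
apply: (mulfI h2).
have := congr1 (fun f => f n) (DM (Efps a c) (Efps a d)).
rewrite /Dop /= => ->.
have := congr1 (fun f => f n) (DE a (c + d)); rewrite /Dop /= => ->.
rewrite -/(Dop (Efps a c)) -/(Dop (Efps a d)) !DE.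
rewrite (Mscale c (Efps a (c - a))) (MC (Efps a c)) (Mscale d (Efps a (d - a))).
rewrite MC ih ih /=.
have e1 : d + (c - a) = c + d - a by rewrite addrA [d + c]addrC.
have e2 : d - a + c = c + d - a by rewrite addrAC [d + c]addrC.
by rewrite e1 e2 mulrDl.
Qed.

Definition Ff (x a b : algC) : fps := fun k => fps_one k - x * (Efps a b k - fps_one k).
Definition Gf x a b := fps_inv (Ff x a b).

Lemma Mscale_r c f g : M f (fun n => c * g n) = fun n => c * M f g n.
Proof. by rewrite MC Mscale MC. Qed.

Lemma F0 x a b : Ff x a b 0%N != 0.
Proof. by rewrite /Ff E0 /fps_one /= subrr mulr0 subr0 oner_neq0. Qed.

Lemma DF x a b : Dop (Ff x a b) = fun n => - (x * b) * Efps a (b - a) n.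
Proof.
apply: functional_extensionality => n.
have h := congr1 (fun f => f n) (DE a b); rewrite /Dop /= in h.
rewrite mulNr -mulrA -h /Ff /fps_one /Dop /= subr0 sub0r mulrN mulrCA.
by [].
Qed.

Lemma MFG x a b : M (Ff x a b) (Gf x a b) = fps_one.
Proof. exact: Minv (F0 x a b). Qed.

Lemma DG x a b : Dop (Gf x a b) =
  fun n => (x * b) * M (Gf x a b) (M (Efps a (b - a)) (Gf x a b)) n.
Proof.
set G := Gf x a b; set F := Ff x a b.
have h : M F (Dop G) = fun n => (x * b) * M (Efps a (b - a)) G n.
  apply: functional_extensionality => n.
  have := congr1 (fun f => f n) (DM F G).
  rewrite MFG /Dop /fps_one /= mulr0 -/(Dop F) -/(Dop G) DF.
  rewrite (Mscale (- (x * b)) (Efps a (b - a))) /= mulNr => /eqP.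
  by rewrite eq_sym addrC subr_eq0 => /eqP <-.
rewrite -[Dop G]M1 -(MFG x a b) -/F -/G [M F G]MC MA h.
by rewrite (Mscale_r (x * b)).
Qed.

Lemma key x a b c n :
  Dop (M (Efps a c) (Gf x a b)) n =
  c * M (Efps a (c - a)) (Gf x a b) n
  + x * b * M (M (Efps a (c + b - a)) (Gf x a b)) (M (Efps a 0) (Gf x a b)) n.
Proof.
rewrite DM DE (Mscale c (Efps a (c - a))) DG.
rewrite (Mscale_r (x * b)) Ezero M1.
set G := Gf x a b.
rewrite (MC G (M _ G)) -MA -MA EE addrA.
by [].
Qed.

Lemma T1E x a b c m : T 1 x a b c m = m`!%:R * M (Efps a c) (Gf x a b) m.
Proof. by rewrite /T /fps_pow /= (MC _ fps_one) M1. Qed.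

Theorem theorem4 (alpha beta gamma x : nat) :
  (alpha, beta, gamma, x) != (0%N, 0%N, 0%N, 0%N) ->
  forall n : nat,
    T 1 x%:R alpha%:R beta%:R gamma%:R n.+1 =
      gamma%:R * T 1 x%:R alpha%:R beta%:R (gamma%:R - alpha%:R) n
    + x%:R * beta%:R *
      \sum_(k < n.+1) 'C(n, k)%:R
          * T 1 x%:R alpha%:R beta%:R (gamma%:R + beta%:R - alpha%:R) k
          * T 1 x%:R alpha%:R beta%:R 0 (n - k)%N.
Proof.
move=> _ n.
set a : algC := alpha%:R; set b : algC := beta%:R; set c : algC := gamma%:R.
set y : algC := x%:R.
rewrite T1E factS natrM -mulrA mulrCA.
have := key y a b c n; rewrite /Dop => ->.
set H := fun d => M (Efps a d) (Gf y a b).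
have hs : \sum_(k < n.+1) 'C(n, k)%:R * T 1 y a b (c + b - a) k * T 1 y a b 0 (n - k)
   = n`!%:R * M (H (c + b - a)) (H 0) n.
  rewrite /M mulr_sumr; apply: eq_bigr => -[k hk] _ /=.
  rewrite !T1E -/(H _) -/(H 0).
  rewrite -(bin_fact (hk : (k <= n)%N)) !natrM.
  by rewrite -!mulrA; congr (_ * (_ * _)); rewrite mulrCA.
rewrite hs T1E /H.
rewrite mulrDr !mulrA; congr (_ + _).
  by rewrite [_ * c]mulrC.
by congr (_ * _); rewrite -mulrA mulrC.
Qed.
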